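(* The Fomin–Kirillov algebra $\mathcal{E}_4$ admits no truncated point modules of degree greater than $1$; in particular $\mathcal{P}_2(\mathcal{E}_4)=\emptyset$.
   Context: Over an algebraically closed field $k$, $\mathcal{E}_4$ is the graded algebra generated by degree-$1$ elements $x_{ij}$, $1\leq i<j\leq 4$, subject to: $x_{ij}^2=0$; $x_{ij}x_{kl}=x_{kl}x_{ij}$ whenever $\{i,j\}\cap\{k,l\}=\emptyset$; $x_{ij}x_{jk}-x_{jk}x_{ik}-x_{ik}x_{ij}=0$ and $x_{jk}x_{ij}-x_{ik}x_{jk}-x_{ij}x_{ik}=0$ for $i<j<k$. A degree-$d$ truncated point module over a connected graded algebra $A$ generated in degree $1$ is a graded cyclic module generated in degree $0$ with Hilbert series $1+t+\cdots+t^d$; $\mathcal{P}_d(A)$ is the space of such modules. *)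

(* Defs.v *)
From mathcomp Require Import all_boot all_order all_algebra.
Set Implicit Arguments. Unset Strict Implicit. Unset Printing Implicit Defensive.
Import GRing.Theory.
Local Open Scope ring_scope.

(* The generators x_{ab} (1 <= a < b <= 4) of E_4 are indexed by pairs
   (a, b) : 'I_4 * 'I_4 with a < b  (0-based: 'I_4 = {0,1,2,3}).

   A graded module M = M_0 (+) ... (+) M_d with every M_i one-dimensional
   (Hilbert series 1 + t + ... + t^d) is, after choosing a basis vector e_i
   of each M_i, described by scalars
       act i a b  with  x_{ab} . e_i = act i a b * e_{i+1}   (i < d),
   while x_{ab} . e_d = 0 because M_{d+1} = 0.  Entries act i a b with
   a >= b or i >= d are irrelevant and ignored. *)
Definition gen_action (k : Type) := nat -> 'I_4 -> 'I_4 -> k.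

(* The defining quadratic relations of E_4 act as zero from M_i to M_{i+2},
   where X = action M_i -> M_{i+1}, Y = action M_{i+1} -> M_{i+2}.
   A product x_{ab} x_{ce} acts on M_i as "first x_{ce} (X), then x_{ab} (Y)". *)
Definition E4_relations_hold (k : comNzRingType) (X Y : 'I_4 -> 'I_4 -> k) : Prop :=
  [/\
      forall a b : 'I_4, (a < b)%N -> Y a b * X a b = 0,
      forall a b c e : 'I_4, (a < b)%N -> (c < e)%N ->
        a != c -> a != e -> b != c -> b != e ->
        Y a b * X c e = Y c e * X a b,
      forall a b c : 'I_4, (a < b)%N -> (b < c)%N ->
        Y a b * X b c - Y b c * X a c - Y a c * X a b = 0 &
      forall a b c : 'I_4, (a < b)%N -> (b < c)%N ->
        Y b c * X a b - Y a c * X b c - Y a b * X a c = 0].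

(* A degree-d truncated point module over E_4 (in the basis described above):
   - it is an E_4-module: every defining relation acts as zero (the only
     nontrivial instances are M_i -> M_{i+2} with i + 2 <= d);
   - it is cyclic generated by M_0: for each i <= d, M_i = A_i M_0, i.e. some
     word x_{w_{i-1}} ... x_{w_0} of length i in the generators maps e_0 to a
     nonzero multiple of e_i. *)
Definition truncated_point_module_E4 (k : comNzRingType) (d : nat)
    (act : gen_action k) : Prop :=
  (forall i : nat, (i.+2 <= d)%N -> E4_relations_hold (act i) (act i.+1)) /\
  (forall i : nat, (i <= d)%N ->
     exists w : seq ('I_4 * 'I_4),
       [/\ size w = i,
           all (fun p : 'I_4 * 'I_4 => (p.1 < p.2)%N) w &
           \prod_(j < i) act j (nth (ord0, ord0) w j).1 (nth (ord0, ord0) w j).2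
             != 0]).

(* Main.v *)
Require Import Defs.
From mathcomp Require Import all_boot all_order all_algebra.
From mathcomp Require Import ring.
Set Implicit Arguments. Unset Strict Implicit. Unset Printing Implicit Defensive.
Import GRing.Theory.
Local Open Scope ring_scope.

Definition i0 : 'I_4 := @Ordinal 4 0 isT.
Definition i1 : 'I_4 := @Ordinal 4 1 isT.
Definition i2 : 'I_4 := @Ordinal 4 2 isT.
Definition i3 : 'I_4 := @Ordinal 4 3 isT.

Lemma I4cases (i : 'I_4) : i = i0 \/ i = i1 \/ i = i2 \/ i = i3.
Proof.
case: i => [[|[|[|[|n]]]] Hi]; try by [].
- by left; apply: val_inj.
- by right; left; apply: val_inj.
- by right; right; left; apply: val_inj.
- by right; right; right; apply: val_inj.
Qed.

Lemma key (R : idomainType) (x y : 'I_4 -> 'I_4 -> R) :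
  E4_relations_hold x y ->
  forall a b c e : 'I_4, (a < b)%N -> (c < e)%N -> x a b * y c e = 0.
Proof.
move=> [h1 h2 h3 h4].
have q01 : y i0 i1 * x i0 i1 = 0 := h1 i0 i1 isT.
have q02 : y i0 i2 * x i0 i2 = 0 := h1 i0 i2 isT.
have q03 : y i0 i3 * x i0 i3 = 0 := h1 i0 i3 isT.
have q12 : y i1 i2 * x i1 i2 = 0 := h1 i1 i2 isT.
have q13 : y i1 i3 * x i1 i3 = 0 := h1 i1 i3 isT.
have q23 : y i2 i3 * x i2 i3 = 0 := h1 i2 i3 isT.
have d01 : y i0 i1 * x i2 i3 - y i2 i3 * x i0 i1 = 0 by rewrite (h2 i0 i1 i2 i3 isT isT isT isT isT isT) subrr.
have d02 : y i0 i2 * x i1 i3 - y i1 i3 * x i0 i2 = 0 by rewrite (h2 i0 i2 i1 i3 isT isT isT isT isT isT) subrr.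
have d03 : y i0 i3 * x i1 i2 - y i1 i2 * x i0 i3 = 0 by rewrite (h2 i0 i3 i1 i2 isT isT isT isT isT isT) subrr.
have t012 := h3 i0 i1 i2 isT isT.
have u012 := h4 i0 i1 i2 isT isT.
have t013 := h3 i0 i1 i3 isT isT.
have u013 := h4 i0 i1 i3 isT isT.
have t023 := h3 i0 i2 i3 isT isT.
have u023 := h4 i0 i2 i3 isT isT.
have t123 := h3 i1 i2 i3 isT isT.
have u123 := h4 i1 i2 i3 isT isT.
have f01_01 : x i0 i1 * y i0 i1 = 0 by rewrite mulrC.
have f02_01 : x i0 i2 * y i0 i1 = 0.
  have E : (y i0 i1 * x i0 i2) * (y i0 i1 * x i0 i2) = - (y i0 i1 * x i0 i2) * (y i1 i2 * x i0 i1 - y i0 i2 * x i1 i2 - y i0 i1 * x i0 i2) + (y i0 i1 * x i0 i1) * (y i1 i2 * x i0 i2) - (y i0 i2 * x i0 i2) * (y i0 i1 * x i1 i2) by ring.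
  have : (y i0 i1 * x i0 i2) * (y i0 i1 * x i0 i2) = 0 by rewrite E u012 q01 q02; ring.
  by move/eqP; rewrite mulf_eq0 orbb => /eqP ht; rewrite mulrC.

have f03_01 : x i0 i3 * y i0 i1 = 0.
  have E : (y i0 i1 * x i0 i3) * (y i0 i1 * x i0 i3) = - (y i0 i1 * x i0 i3) * (y i1 i3 * x i0 i1 - y i0 i3 * x i1 i3 - y i0 i1 * x i0 i3) + (y i0 i1 * x i0 i1) * (y i1 i3 * x i0 i3) - (y i0 i3 * x i0 i3) * (y i0 i1 * x i1 i3) by ring.
  have : (y i0 i1 * x i0 i3) * (y i0 i1 * x i0 i3) = 0 by rewrite E u013 q01 q03; ring.
  by move/eqP; rewrite mulf_eq0 orbb => /eqP ht; rewrite mulrC.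

have f12_01 : x i1 i2 * y i0 i1 = 0.
  have E : (y i0 i1 * x i1 i2) * (y i0 i1 * x i1 i2) = 1%:R * (y i0 i1 * x i1 i2) * (y i0 i1 * x i1 i2 - y i1 i2 * x i0 i2 - y i0 i2 * x i0 i1) + (y i1 i2 * x i1 i2) * (y i0 i1 * x i0 i2) + (y i0 i1 * x i0 i1) * (y i0 i2 * x i1 i2) by ring.
  have : (y i0 i1 * x i1 i2) * (y i0 i1 * x i1 i2) = 0 by rewrite E t012 q12 q01; ring.
  by move/eqP; rewrite mulf_eq0 orbb => /eqP ht; rewrite mulrC.

have f13_01 : x i1 i3 * y i0 i1 = 0.
  have E : (y i0 i1 * x i1 i3) * (y i0 i1 * x i1 i3) = 1%:R * (y i0 i1 * x i1 i3) * (y i0 i1 * x i1 i3 - y i1 i3 * x i0 i3 - y i0 i3 * x i0 i1) + (y i1 i3 * x i1 i3) * (y i0 i1 * x i0 i3) + (y i0 i1 * x i0 i1) * (y i0 i3 * x i1 i3) by ring.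
  have : (y i0 i1 * x i1 i3) * (y i0 i1 * x i1 i3) = 0 by rewrite E t013 q13 q01; ring.
  by move/eqP; rewrite mulf_eq0 orbb => /eqP ht; rewrite mulrC.

have f23_01 : x i2 i3 * y i0 i1 = 0.
  have E : (y i0 i1 * x i2 i3) * (y i0 i1 * x i2 i3) = 1%:R * (y i0 i1 * x i2 i3) * (y i0 i1 * x i2 i3 - y i2 i3 * x i0 i1) + (y i2 i3 * x i2 i3) * (y i0 i1 * x i0 i1) by ring.
  have : (y i0 i1 * x i2 i3) * (y i0 i1 * x i2 i3) = 0 by rewrite E d01 q23; ring.
  by move/eqP; rewrite mulf_eq0 orbb => /eqP ht; rewrite mulrC.

have f01_02 : x i0 i1 * y i0 i2 = 0.
  have E : (y i0 i2 * x i0 i1) * (y i0 i2 * x i0 i1) = - (y i0 i2 * x i0 i1) * (y i0 i1 * x i1 i2 - y i1 i2 * x i0 i2 - y i0 i2 * x i0 i1) + (y i0 i1 * x i0 i1) * (y i0 i2 * x i1 i2) - (y i0 i2 * x i0 i2) * (y i1 i2 * x i0 i1) by ring.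
  have : (y i0 i2 * x i0 i1) * (y i0 i2 * x i0 i1) = 0 by rewrite E t012 q01 q02; ring.
  by move/eqP; rewrite mulf_eq0 orbb => /eqP ht; rewrite mulrC.

have f02_02 : x i0 i2 * y i0 i2 = 0 by rewrite mulrC.
have f03_02 : x i0 i3 * y i0 i2 = 0.
  have E : (y i0 i2 * x i0 i3) * (y i0 i2 * x i0 i3) = - (y i0 i2 * x i0 i3) * (y i2 i3 * x i0 i2 - y i0 i3 * x i2 i3 - y i0 i2 * x i0 i3) + (y i0 i2 * x i0 i2) * (y i2 i3 * x i0 i3) - (y i0 i3 * x i0 i3) * (y i0 i2 * x i2 i3) by ring.
  have : (y i0 i2 * x i0 i3) * (y i0 i2 * x i0 i3) = 0 by rewrite E u023 q02 q03; ring.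
  by move/eqP; rewrite mulf_eq0 orbb => /eqP ht; rewrite mulrC.

have f12_02 : x i1 i2 * y i0 i2 = 0.
  have E : (y i0 i2 * x i1 i2) * (y i0 i2 * x i1 i2) = - (y i0 i2 * x i1 i2) * (y i1 i2 * x i0 i1 - y i0 i2 * x i1 i2 - y i0 i1 * x i0 i2) + (y i1 i2 * x i1 i2) * (y i0 i2 * x i0 i1) - (y i0 i2 * x i0 i2) * (y i0 i1 * x i1 i2) by ring.
  have : (y i0 i2 * x i1 i2) * (y i0 i2 * x i1 i2) = 0 by rewrite E u012 q12 q02; ring.
  by move/eqP; rewrite mulf_eq0 orbb => /eqP ht; rewrite mulrC.

have f13_02 : x i1 i3 * y i0 i2 = 0.
  have E : (y i0 i2 * x i1 i3) * (y i0 i2 * x i1 i3) = 1%:R * (y i0 i2 * x i1 i3) * (y i0 i2 * x i1 i3 - y i1 i3 * x i0 i2) + (y i1 i3 * x i1 i3) * (y i0 i2 * x i0 i2) by ring.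
  have : (y i0 i2 * x i1 i3) * (y i0 i2 * x i1 i3) = 0 by rewrite E d02 q13; ring.
  by move/eqP; rewrite mulf_eq0 orbb => /eqP ht; rewrite mulrC.

have f23_02 : x i2 i3 * y i0 i2 = 0.
  have E : (y i0 i2 * x i2 i3) * (y i0 i2 * x i2 i3) = 1%:R * (y i0 i2 * x i2 i3) * (y i0 i2 * x i2 i3 - y i2 i3 * x i0 i3 - y i0 i3 * x i0 i2) + (y i2 i3 * x i2 i3) * (y i0 i2 * x i0 i3) + (y i0 i2 * x i0 i2) * (y i0 i3 * x i2 i3) by ring.
  have : (y i0 i2 * x i2 i3) * (y i0 i2 * x i2 i3) = 0 by rewrite E t023 q23 q02; ring.
  by move/eqP; rewrite mulf_eq0 orbb => /eqP ht; rewrite mulrC.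

have f01_03 : x i0 i1 * y i0 i3 = 0.
  have E : (y i0 i3 * x i0 i1) * (y i0 i3 * x i0 i1) = - (y i0 i3 * x i0 i1) * (y i0 i1 * x i1 i3 - y i1 i3 * x i0 i3 - y i0 i3 * x i0 i1) + (y i0 i1 * x i0 i1) * (y i0 i3 * x i1 i3) - (y i0 i3 * x i0 i3) * (y i1 i3 * x i0 i1) by ring.
  have : (y i0 i3 * x i0 i1) * (y i0 i3 * x i0 i1) = 0 by rewrite E t013 q01 q03; ring.
  by move/eqP; rewrite mulf_eq0 orbb => /eqP ht; rewrite mulrC.

have f02_03 : x i0 i2 * y i0 i3 = 0.
  have E : (y i0 i3 * x i0 i2) * (y i0 i3 * x i0 i2) = - (y i0 i3 * x i0 i2) * (y i0 i2 * x i2 i3 - y i2 i3 * x i0 i3 - y i0 i3 * x i0 i2) + (y i0 i2 * x i0 i2) * (y i0 i3 * x i2 i3) - (y i0 i3 * x i0 i3) * (y i2 i3 * x i0 i2) by ring.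
  have : (y i0 i3 * x i0 i2) * (y i0 i3 * x i0 i2) = 0 by rewrite E t023 q02 q03; ring.
  by move/eqP; rewrite mulf_eq0 orbb => /eqP ht; rewrite mulrC.

have f03_03 : x i0 i3 * y i0 i3 = 0 by rewrite mulrC.
have f12_03 : x i1 i2 * y i0 i3 = 0.
  have E : (y i0 i3 * x i1 i2) * (y i0 i3 * x i1 i2) = 1%:R * (y i0 i3 * x i1 i2) * (y i0 i3 * x i1 i2 - y i1 i2 * x i0 i3) + (y i1 i2 * x i1 i2) * (y i0 i3 * x i0 i3) by ring.
  have : (y i0 i3 * x i1 i2) * (y i0 i3 * x i1 i2) = 0 by rewrite E d03 q12; ring.
  by move/eqP; rewrite mulf_eq0 orbb => /eqP ht; rewrite mulrC.

have f13_03 : x i1 i3 * y i0 i3 = 0.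
  have E : (y i0 i3 * x i1 i3) * (y i0 i3 * x i1 i3) = - (y i0 i3 * x i1 i3) * (y i1 i3 * x i0 i1 - y i0 i3 * x i1 i3 - y i0 i1 * x i0 i3) + (y i1 i3 * x i1 i3) * (y i0 i3 * x i0 i1) - (y i0 i3 * x i0 i3) * (y i0 i1 * x i1 i3) by ring.
  have : (y i0 i3 * x i1 i3) * (y i0 i3 * x i1 i3) = 0 by rewrite E u013 q13 q03; ring.
  by move/eqP; rewrite mulf_eq0 orbb => /eqP ht; rewrite mulrC.

have f23_03 : x i2 i3 * y i0 i3 = 0.
  have E : (y i0 i3 * x i2 i3) * (y i0 i3 * x i2 i3) = - (y i0 i3 * x i2 i3) * (y i2 i3 * x i0 i2 - y i0 i3 * x i2 i3 - y i0 i2 * x i0 i3) + (y i2 i3 * x i2 i3) * (y i0 i3 * x i0 i2) - (y i0 i3 * x i0 i3) * (y i0 i2 * x i2 i3) by ring.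
  have : (y i0 i3 * x i2 i3) * (y i0 i3 * x i2 i3) = 0 by rewrite E u023 q23 q03; ring.
  by move/eqP; rewrite mulf_eq0 orbb => /eqP ht; rewrite mulrC.

have f01_12 : x i0 i1 * y i1 i2 = 0.
  have E : (y i1 i2 * x i0 i1) * (y i1 i2 * x i0 i1) = 1%:R * (y i1 i2 * x i0 i1) * (y i1 i2 * x i0 i1 - y i0 i2 * x i1 i2 - y i0 i1 * x i0 i2) + (y i1 i2 * x i1 i2) * (y i0 i2 * x i0 i1) + (y i0 i1 * x i0 i1) * (y i1 i2 * x i0 i2) by ring.
  have : (y i1 i2 * x i0 i1) * (y i1 i2 * x i0 i1) = 0 by rewrite E u012 q12 q01; ring.
  by move/eqP; rewrite mulf_eq0 orbb => /eqP ht; rewrite mulrC.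

have f02_12 : x i0 i2 * y i1 i2 = 0.
  have E : (y i1 i2 * x i0 i2) * (y i1 i2 * x i0 i2) = - (y i1 i2 * x i0 i2) * (y i0 i1 * x i1 i2 - y i1 i2 * x i0 i2 - y i0 i2 * x i0 i1) + (y i1 i2 * x i1 i2) * (y i0 i1 * x i0 i2) - (y i0 i2 * x i0 i2) * (y i1 i2 * x i0 i1) by ring.
  have : (y i1 i2 * x i0 i2) * (y i1 i2 * x i0 i2) = 0 by rewrite E t012 q12 q02; ring.
  by move/eqP; rewrite mulf_eq0 orbb => /eqP ht; rewrite mulrC.

have f03_12 : x i0 i3 * y i1 i2 = 0.
  have E : (y i1 i2 * x i0 i3) * (y i1 i2 * x i0 i3) = - (y i1 i2 * x i0 i3) * (y i0 i3 * x i1 i2 - y i1 i2 * x i0 i3) + (y i0 i3 * x i0 i3) * (y i1 i2 * x i1 i2) by ring.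
  have : (y i1 i2 * x i0 i3) * (y i1 i2 * x i0 i3) = 0 by rewrite E d03 q03; ring.
  by move/eqP; rewrite mulf_eq0 orbb => /eqP ht; rewrite mulrC.

have f12_12 : x i1 i2 * y i1 i2 = 0 by rewrite mulrC.
have f13_12 : x i1 i3 * y i1 i2 = 0.
  have E : (y i1 i2 * x i1 i3) * (y i1 i2 * x i1 i3) = - (y i1 i2 * x i1 i3) * (y i2 i3 * x i1 i2 - y i1 i3 * x i2 i3 - y i1 i2 * x i1 i3) + (y i1 i2 * x i1 i2) * (y i2 i3 * x i1 i3) - (y i1 i3 * x i1 i3) * (y i1 i2 * x i2 i3) by ring.
  have : (y i1 i2 * x i1 i3) * (y i1 i2 * x i1 i3) = 0 by rewrite E u123 q12 q13; ring.
  by move/eqP; rewrite mulf_eq0 orbb => /eqP ht; rewrite mulrC.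

have f23_12 : x i2 i3 * y i1 i2 = 0.
  have E : (y i1 i2 * x i2 i3) * (y i1 i2 * x i2 i3) = 1%:R * (y i1 i2 * x i2 i3) * (y i1 i2 * x i2 i3 - y i2 i3 * x i1 i3 - y i1 i3 * x i1 i2) + (y i2 i3 * x i2 i3) * (y i1 i2 * x i1 i3) + (y i1 i2 * x i1 i2) * (y i1 i3 * x i2 i3) by ring.
  have : (y i1 i2 * x i2 i3) * (y i1 i2 * x i2 i3) = 0 by rewrite E t123 q23 q12; ring.
  by move/eqP; rewrite mulf_eq0 orbb => /eqP ht; rewrite mulrC.

have f01_13 : x i0 i1 * y i1 i3 = 0.
  have E : (y i1 i3 * x i0 i1) * (y i1 i3 * x i0 i1) = 1%:R * (y i1 i3 * x i0 i1) * (y i1 i3 * x i0 i1 - y i0 i3 * x i1 i3 - y i0 i1 * x i0 i3) + (y i1 i3 * x i1 i3) * (y i0 i3 * x i0 i1) + (y i0 i1 * x i0 i1) * (y i1 i3 * x i0 i3) by ring.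
  have : (y i1 i3 * x i0 i1) * (y i1 i3 * x i0 i1) = 0 by rewrite E u013 q13 q01; ring.
  by move/eqP; rewrite mulf_eq0 orbb => /eqP ht; rewrite mulrC.

have f02_13 : x i0 i2 * y i1 i3 = 0.
  have E : (y i1 i3 * x i0 i2) * (y i1 i3 * x i0 i2) = - (y i1 i3 * x i0 i2) * (y i0 i2 * x i1 i3 - y i1 i3 * x i0 i2) + (y i0 i2 * x i0 i2) * (y i1 i3 * x i1 i3) by ring.
  have : (y i1 i3 * x i0 i2) * (y i1 i3 * x i0 i2) = 0 by rewrite E d02 q02; ring.
  by move/eqP; rewrite mulf_eq0 orbb => /eqP ht; rewrite mulrC.

have f03_13 : x i0 i3 * y i1 i3 = 0.
  have E : (y i1 i3 * x i0 i3) * (y i1 i3 * x i0 i3) = - (y i1 i3 * x i0 i3) * (y i0 i1 * x i1 i3 - y i1 i3 * x i0 i3 - y i0 i3 * x i0 i1) + (y i1 i3 * x i1 i3) * (y i0 i1 * x i0 i3) - (y i0 i3 * x i0 i3) * (y i1 i3 * x i0 i1) by ring.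
  have : (y i1 i3 * x i0 i3) * (y i1 i3 * x i0 i3) = 0 by rewrite E t013 q13 q03; ring.
  by move/eqP; rewrite mulf_eq0 orbb => /eqP ht; rewrite mulrC.

have f12_13 : x i1 i2 * y i1 i3 = 0.
  have E : (y i1 i3 * x i1 i2) * (y i1 i3 * x i1 i2) = - (y i1 i3 * x i1 i2) * (y i1 i2 * x i2 i3 - y i2 i3 * x i1 i3 - y i1 i3 * x i1 i2) + (y i1 i2 * x i1 i2) * (y i1 i3 * x i2 i3) - (y i1 i3 * x i1 i3) * (y i2 i3 * x i1 i2) by ring.
  have : (y i1 i3 * x i1 i2) * (y i1 i3 * x i1 i2) = 0 by rewrite E t123 q12 q13; ring.
  by move/eqP; rewrite mulf_eq0 orbb => /eqP ht; rewrite mulrC.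

have f13_13 : x i1 i3 * y i1 i3 = 0 by rewrite mulrC.
have f23_13 : x i2 i3 * y i1 i3 = 0.
  have E : (y i1 i3 * x i2 i3) * (y i1 i3 * x i2 i3) = - (y i1 i3 * x i2 i3) * (y i2 i3 * x i1 i2 - y i1 i3 * x i2 i3 - y i1 i2 * x i1 i3) + (y i2 i3 * x i2 i3) * (y i1 i3 * x i1 i2) - (y i1 i3 * x i1 i3) * (y i1 i2 * x i2 i3) by ring.
  have : (y i1 i3 * x i2 i3) * (y i1 i3 * x i2 i3) = 0 by rewrite E u123 q23 q13; ring.
  by move/eqP; rewrite mulf_eq0 orbb => /eqP ht; rewrite mulrC.

have f01_23 : x i0 i1 * y i2 i3 = 0.
  have E : (y i2 i3 * x i0 i1) * (y i2 i3 * x i0 i1) = - (y i2 i3 * x i0 i1) * (y i0 i1 * x i2 i3 - y i2 i3 * x i0 i1) + (y i0 i1 * x i0 i1) * (y i2 i3 * x i2 i3) by ring.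
  have : (y i2 i3 * x i0 i1) * (y i2 i3 * x i0 i1) = 0 by rewrite E d01 q01; ring.
  by move/eqP; rewrite mulf_eq0 orbb => /eqP ht; rewrite mulrC.

have f02_23 : x i0 i2 * y i2 i3 = 0.
  have E : (y i2 i3 * x i0 i2) * (y i2 i3 * x i0 i2) = 1%:R * (y i2 i3 * x i0 i2) * (y i2 i3 * x i0 i2 - y i0 i3 * x i2 i3 - y i0 i2 * x i0 i3) + (y i2 i3 * x i2 i3) * (y i0 i3 * x i0 i2) + (y i0 i2 * x i0 i2) * (y i2 i3 * x i0 i3) by ring.
  have : (y i2 i3 * x i0 i2) * (y i2 i3 * x i0 i2) = 0 by rewrite E u023 q23 q02; ring.
  by move/eqP; rewrite mulf_eq0 orbb => /eqP ht; rewrite mulrC.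

have f03_23 : x i0 i3 * y i2 i3 = 0.
  have E : (y i2 i3 * x i0 i3) * (y i2 i3 * x i0 i3) = - (y i2 i3 * x i0 i3) * (y i0 i2 * x i2 i3 - y i2 i3 * x i0 i3 - y i0 i3 * x i0 i2) + (y i2 i3 * x i2 i3) * (y i0 i2 * x i0 i3) - (y i0 i3 * x i0 i3) * (y i2 i3 * x i0 i2) by ring.
  have : (y i2 i3 * x i0 i3) * (y i2 i3 * x i0 i3) = 0 by rewrite E t023 q23 q03; ring.
  by move/eqP; rewrite mulf_eq0 orbb => /eqP ht; rewrite mulrC.

have f12_23 : x i1 i2 * y i2 i3 = 0.
  have E : (y i2 i3 * x i1 i2) * (y i2 i3 * x i1 i2) = 1%:R * (y i2 i3 * x i1 i2) * (y i2 i3 * x i1 i2 - y i1 i3 * x i2 i3 - y i1 i2 * x i1 i3) + (y i2 i3 * x i2 i3) * (y i1 i3 * x i1 i2) + (y i1 i2 * x i1 i2) * (y i2 i3 * x i1 i3) by ring.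
  have : (y i2 i3 * x i1 i2) * (y i2 i3 * x i1 i2) = 0 by rewrite E u123 q23 q12; ring.
  by move/eqP; rewrite mulf_eq0 orbb => /eqP ht; rewrite mulrC.

have f13_23 : x i1 i3 * y i2 i3 = 0.
  have E : (y i2 i3 * x i1 i3) * (y i2 i3 * x i1 i3) = - (y i2 i3 * x i1 i3) * (y i1 i2 * x i2 i3 - y i2 i3 * x i1 i3 - y i1 i3 * x i1 i2) + (y i2 i3 * x i2 i3) * (y i1 i2 * x i1 i3) - (y i1 i3 * x i1 i3) * (y i2 i3 * x i1 i2) by ring.
  have : (y i2 i3 * x i1 i3) * (y i2 i3 * x i1 i3) = 0 by rewrite E t123 q23 q13; ring.
  by move/eqP; rewrite mulf_eq0 orbb => /eqP ht; rewrite mulrC.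

have f23_23 : x i2 i3 * y i2 i3 = 0 by rewrite mulrC.
clear -f01_01 f02_01 f03_01 f12_01 f13_01 f23_01 f01_02 f02_02 f03_02 f12_02 f13_02 f23_02 f01_03 f02_03 f03_03 f12_03 f13_03 f23_03 f01_12 f02_12 f03_12 f12_12 f13_12 f23_12 f01_13 f02_13 f03_13 f12_13 f13_13 f23_13 f01_23 f02_23 f03_23 f12_23 f13_23 f23_23.
move=> a b c e hab hce.
have [Ea|[Ea|[Ea|Ea]]] := I4cases a; subst a;
have [Eb|[Eb|[Eb|Eb]]] := I4cases b; subst b; try (by move: hab; rewrite /i0 /i1 /i2 /i3);
have [Ec|[Ec|[Ec|Ec]]] := I4cases c; subst c;
have [Ee|[Ee|[Ee|Ee]]] := I4cases e; subst e; try (by move: hce; rewrite /i0 /i1 /i2 /i3);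
match goal with H : ?G |- ?G => exact H end.
Qed.

Theorem proposition2p2 (k : closedFieldType) (d : nat) :
  (1 < d)%N -> forall act : gen_action k, ~ truncated_point_module_E4 d act.
Proof.
move=> hd act [Hrel Hcyc].
have [w [Hs Ha Hp]] := Hcyc 2%N hd.
move: Hs Ha Hp; case: w => [|p0 [|p1 [|? ?]]] //= _.
rewrite andbT => /andP [h0 h1].
rewrite big_ord_recr big_ord_recr big_ord0 /= mul1r.
by rewrite (key (Hrel 0%N hd) h0 h1) eqxx.
Qed.
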